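(* Let $X$ be a Banach space, $F\colon X\to\mathbb{R}$ locally Lipschitz at $\bar x\in X$, $(u,v)\in X\times X$, and let $\{(t_k,v^k)\}\subset(0,\infty)\times X$ with $t_k\downarrow 0$, $v^k\to v$, and $F\left(\bar x+t_ku+\tfrac12t_k^2v^k\right)\geqq F(\bar x)$ for all $k\in\mathbb{N}$. If $F^{\circ}(\bar x,u)=0$, then $F^{\circ}(\bar x,v)+F^{\circ\circ}(\bar x,u)\geqq 0$.
   Context: $F$ is locally Lipschitz at $\bar x$ if there are a neighborhood $U$ of $\bar x$ and $L\geqq 0$ with $|F(x)-F(y)|\leqq L\|x-y\|$ for all $x,y\in U$. Clarke's generalized directional derivative: $F^{\circ}(\bar x,u):=\limsup_{x\to\bar x,\ t\downarrow 0}\frac{F(x+tu)-F(x)}{t}$ (finite). Second-order upper generalized directional derivative: $F^{\circ\circ}(\bar x,u):=\limsup_{t\downarrow 0}\frac{F(\bar x+tu)-F(\bar x)-tF^{\circ}(\bar x,u)}{\frac12 t^2}$ (a value in $[-\infty,+\infty]$). *)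

(* Defs.v *)
From Stdlib Require Import Reals Lra.
Open Scope R_scope.

Record BanachSpace := {
  carrier :> Type;
  vplus : carrier -> carrier -> carrier;
  vscal : R -> carrier -> carrier;
  vzero : carrier;
  vopp : carrier -> carrier;
  vnorm : carrier -> R;
  vplus_assoc : forall x y z, vplus x (vplus y z) = vplus (vplus x y) z;
  vplus_comm : forall x y, vplus x y = vplus y x;
  vplus_zero : forall x, vplus x vzero = x;
  vplus_opp : forall x, vplus x (vopp x) = vzero;
  vscal_assoc : forall a b x, vscal a (vscal b x) = vscal (a * b) x;
  vscal_one : forall x, vscal 1 x = x;
  vscal_distr_v : forall a x y, vscal a (vplus x y) = vplus (vscal a x) (vscal a y);
  vscal_distr_s : forall a b x, vscal (a + b) x = vplus (vscal a x) (vscal b x);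
  vnorm_zero : forall x, vnorm x = 0 -> x = vzero;
  vnorm_scal : forall a x, vnorm (vscal a x) = Rabs a * vnorm x;
  vnorm_triangle : forall x y, vnorm (vplus x y) <= vnorm x + vnorm y;
  vcomplete : forall u : nat -> carrier,
    (forall eps, eps > 0 -> exists N, forall n m, (n >= N)%nat -> (m >= N)%nat ->
        vnorm (vplus (u n) (vopp (u m))) < eps) ->
    exists l, forall eps, eps > 0 -> exists N, forall n, (n >= N)%nat ->
        vnorm (vplus (u n) (vopp l)) < eps
}.

Arguments vplus {_}. Arguments vscal {_}. Arguments vzero {_}.
Arguments vopp {_}. Arguments vnorm {_}.

Definition vminus {X : BanachSpace} (x y : X) : X := vplus x (vopp y).

Definition vseq_cv {X : BanachSpace} (u : nat -> X) (l : X) : Prop :=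
  forall eps, eps > 0 -> exists N, forall n, (n >= N)%nat -> vnorm (vminus (u n) l) < eps.

Definition locally_lipschitz {X : BanachSpace} (F : X -> R) (xbar : X) : Prop :=
  exists delta L, delta > 0 /\ L >= 0 /\
    forall x y, vnorm (vminus x xbar) < delta -> vnorm (vminus y xbar) < delta ->
      Rabs (F x - F y) <= L * vnorm (vminus x y).

(* c = F°(xbar,u) = limsup_{x -> xbar, t ↓ 0} (F(x+tu) - F(x))/t  (finite value) *)
Definition is_clarke_dd {X : BanachSpace} (F : X -> R) (xbar u : X) (c : R) : Prop :=
  (forall eps, eps > 0 -> exists delta, delta > 0 /\
     forall x t, vnorm (vminus x xbar) < delta -> 0 < t < delta ->
       (F (vplus x (vscal t u)) - F x) / t <= c + eps) /\
  (forall eps delta, eps > 0 -> delta > 0 -> exists x t,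
     vnorm (vminus x xbar) < delta /\ 0 < t < delta /\
     c - eps < (F (vplus x (vscal t u)) - F x) / t).

Inductive Rbar := Finite (r : R) | p_infty | m_infty.

Definition is_limsup_0 (g : R -> R) (l : Rbar) : Prop :=
  match l with
  | Finite c =>
      (forall eps, eps > 0 -> exists delta, delta > 0 /\
         forall t, 0 < t < delta -> g t <= c + eps) /\
      (forall eps delta, eps > 0 -> delta > 0 -> exists t, 0 < t < delta /\ c - eps < g t)
  | p_infty => forall M delta, delta > 0 -> exists t, 0 < t < delta /\ M < g t
  | m_infty => forall M, exists delta, delta > 0 /\ forall t, 0 < t < delta -> g t <= M
  end.

(* l = F°°(xbar,u), given c = F°(xbar,u) *)
Definition is_second_dd {X : BanachSpace} (F : X -> R) (xbar u : X) (c : R) (l : Rbar) : Prop :=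
  is_limsup_0 (fun t => (F (vplus xbar (vscal t u)) - F xbar - t * c) / (/2 * t ^ 2)) l.

Definition Rbar_sum_nonneg (a : R) (l : Rbar) : Prop :=
  match l with
  | Finite c => 0 <= a + c
  | p_infty => True
  | m_infty => False
  end.

(* Main.v *)
Require Import Defs.
From Stdlib Require Import Reals Lra Lia.
Open Scope R_scope.

Section Alg.
Variable X : BanachSpace.

Lemma zero_l (x : X) : vplus vzero x = x.
Proof. rewrite vplus_comm; apply vplus_zero. Qed.

Lemma cancel_l (a b c : X) : vplus a b = vplus a c -> b = c.
Proof.
  intro H. assert (E: forall y, vplus (vopp a) (vplus a y) = y).
  { intro y. rewrite vplus_assoc, (vplus_comm _ (vopp a) a), vplus_opp. apply zero_l. }
  rewrite <- (E b), <- (E c), H; reflexivity.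
Qed.

Lemma scal_zero_v (a : R) : vscal a (@vzero X) = vzero.
Proof.
  apply (cancel_l (vscal a vzero)). rewrite <- vscal_distr_v, !vplus_zero. reflexivity.
Qed.

Lemma scal0 (x : X) : vscal 0 x = vzero.
Proof.
  apply (cancel_l (vscal 0 x)). rewrite <- vscal_distr_s, vplus_zero.
  replace (0+0) with 0 by ring. reflexivity.
Qed.

Lemma opp_unique (a b : X) : vplus a b = vzero -> b = vopp a.
Proof.
  intro H. rewrite <- (zero_l b), <- (vplus_opp _ a), (vplus_comm _ a),
    <- vplus_assoc, H, vplus_zero. reflexivity.
Qed.

Lemma opp_scal (x : X) : vopp x = vscal (-1) x.
Proof.
  symmetry. apply opp_unique. rewrite <- (vscal_one _ x) at 1.
  rewrite <- vscal_distr_s. replace (1 + -1) with 0 by ring. apply scal0.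
Qed.

Lemma scal_opp (a : R) (x : X) : vscal a (vopp x) = vopp (vscal a x).
Proof. rewrite !opp_scal, !vscal_assoc. f_equal. ring. Qed.

Lemma opp_plus (x y : X) : vopp (vplus x y) = vplus (vopp x) (vopp y).
Proof. rewrite !opp_scal. apply vscal_distr_v. Qed.

Lemma swap4 (a b c d : X) : vplus (vplus a b) (vplus c d) = vplus (vplus a c) (vplus b d).
Proof.
  rewrite <- !vplus_assoc. f_equal. rewrite !vplus_assoc. f_equal. apply vplus_comm.
Qed.

Lemma minus_plus_l (x y : X) : vminus (vplus x y) x = y.
Proof.
  unfold vminus. rewrite (vplus_comm _ x), <- vplus_assoc, vplus_opp. apply vplus_zero.
Qed.

Lemma key1 (x a w z : X) (s : R) :
  vminus (vplus x (vplus a (vscal s w))) (vplus (vplus x a) (vscal s z)) = vscal s (vminus w z).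
Proof.
  unfold vminus. rewrite (vplus_assoc _ x a), !opp_plus, swap4, (swap4 x a),
    !vplus_opp, !zero_l, <- scal_opp, vscal_distr_v. reflexivity.
Qed.

Lemma decomp (w z : X) : w = vplus (vminus w z) z.
Proof.
  unfold vminus. rewrite <- vplus_assoc, (vplus_comm _ (vopp z)), vplus_opp, vplus_zero.
  reflexivity.
Qed.

Lemma norm_nonneg (x : X) : 0 <= vnorm x.
Proof.
  assert (H0 : vnorm (@vzero X) = 0).
  { rewrite <- (scal0 vzero), vnorm_scal, Rabs_R0. ring. }
  pose proof (vnorm_triangle _ x (vopp x)) as T.
  rewrite vplus_opp, H0, opp_scal, vnorm_scal in T.
  replace (Rabs (-1)) with 1 in T by (rewrite Rabs_left; lra). lra.
Qed.

End Alg.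

Theorem lemma2 (X : BanachSpace) (F : X -> R) (xbar u v : X)
  (t : nat -> R) (vk : nat -> X)
  (HF : locally_lipschitz F xbar)
  (Ht_pos : forall k, 0 < t k)
  (Ht_cv : Un_cv t 0)
  (Hv_cv : vseq_cv vk v)
  (Hineq : forall k, F xbar <= F (vplus xbar (vplus (vscal (t k) u) (vscal (/2 * (t k) ^ 2) (vk k)))))
  (Hu : is_clarke_dd F xbar u 0) :
  forall (cv : R) (l : Rbar),
    is_clarke_dd F xbar v cv ->
    is_second_dd F xbar u 0 l ->
    Rbar_sum_nonneg cv l.
Proof.
  intros cv l [Hv1 _] Hl.
  assert (Claim : forall eps B, eps > 0 ->
     (exists d0, d0 > 0 /\ forall tau, 0 < tau < d0 ->
        (F (vplus xbar (vscal tau u)) - F xbar - tau * 0) / (/2 * tau ^ 2) <= B) ->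
     0 <= cv + B + 2 * eps).
  { intros eps B Heps [d0 [Hd0 Hg]].
    destruct HF as [dL [L [HdL [HL HLip]]]].
    destruct (Hv1 eps Heps) as [dv [Hdv Hv]].
    set (e' := eps / (L + 1)).
    assert (He' : e' > 0) by (unfold e'; apply Rdiv_lt_0_compat; lra).
    destruct (Hv_cv e' He') as [N2 HN2].
    set (nu := vnorm u). set (nv := vnorm v).
    assert (Hnu : 0 <= nu) by apply norm_nonneg.
    assert (Hnv : 0 <= nv) by apply norm_nonneg.
    set (m := Rmin 1 (Rmin d0 (Rmin dv dL))).
    assert (Hm1 : m <= 1) by apply Rmin_l.
    assert (Hm2 : m <= d0) by (unfold m; eapply Rle_trans; [apply Rmin_r|apply Rmin_l]).
    assert (Hm3 : m <= dv) by (unfold m; eapply Rle_trans; [apply Rmin_r|];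
       eapply Rle_trans; [apply Rmin_r|apply Rmin_l]).
    assert (Hm4 : m <= dL) by (unfold m; eapply Rle_trans; [apply Rmin_r|];
       eapply Rle_trans; [apply Rmin_r|apply Rmin_r]).
    assert (Hm0 : 0 < m) by (unfold m; repeat apply Rmin_pos; lra).
    set (K := 1 + nu + nv + e').
    assert (HK : 1 <= K) by (unfold K; lra).
    assert (Heta : m / K > 0) by (apply Rdiv_lt_0_compat; lra).
    destruct (Ht_cv (m / K) Heta) as [N1 HN1].
    set (k := Nat.max N1 N2).
    specialize (HN1 k ltac:(unfold k; lia)).
    specialize (HN2 k ltac:(unfold k; lia)).
    unfold Rdist in HN1. rewrite Rminus_0_r in HN1.
    specialize (Ht_pos k). specialize (Hineq k).
    set (tk := t k) in *. set (w := vk k) in *.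
    rewrite Rabs_pos_eq in HN1 by lra.
    assert (HtK : tk * K < m).
    { apply (Rmult_lt_compat_r K) in HN1; [|lra].
      unfold Rdiv in HN1. rewrite Rmult_assoc, Rinv_l, Rmult_1_r in HN1 by lra. lra. }
    assert (Htm : tk < m) by nra.
    set (s := / 2 * tk ^ 2).
    assert (Hs0 : 0 < s) by (unfold s; nra).
    assert (Hst : s <= tk) by (unfold s; nra).
    set (nd := vnorm (vminus w v)).
    assert (Hnd : 0 <= nd) by apply norm_nonneg.
    assert (Hnd2 : nd < e') by exact HN2.
    set (y := vplus xbar (vscal tk u)).
    assert (Hy : vnorm (vminus y xbar) = tk * nu).
    { unfold y. rewrite minus_plus_l, vnorm_scal, Rabs_pos_eq by lra. reflexivity. }
    set (xk := vplus xbar (vplus (vscal tk u) (vscal s w))).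
    set (z := vplus y (vscal s v)).
    assert (Hxkz : vnorm (vminus xk z) = s * nd).
    { unfold xk, z, y. rewrite key1, vnorm_scal, Rabs_pos_eq by lra. reflexivity. }
    assert (Hnw : vnorm w <= nd + nv).
    { rewrite (decomp X w v) at 1. apply vnorm_triangle. }
    assert (Hxk : vnorm (vminus xk xbar) < dL).
    { unfold xk. rewrite minus_plus_l.
      eapply Rle_lt_trans; [apply vnorm_triangle|].
      rewrite !vnorm_scal, !Rabs_pos_eq by lra. fold nu.
      assert (s * vnorm w <= tk * (nd + nv)).
      { apply Rmult_le_compat; try lra. apply norm_nonneg. }
      unfold K in HtK. nra. }
    assert (Hz : vnorm (vminus z xbar) < dL).
    { assert (Ez : z = vplus xbar (vplus (vscal tk u) (vscal s v))).
      { unfold z, y. symmetry. apply vplus_assoc. }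
      rewrite Ez, minus_plus_l.
      eapply Rle_lt_trans; [apply vnorm_triangle|].
      rewrite !vnorm_scal, !Rabs_pos_eq by lra. fold nu nv.
      unfold K in HtK. nra. }
    pose proof (HLip xk z Hxk Hz) as Lip. rewrite Hxkz in Lip.
    assert (HLe : L * nd <= eps).
    { assert (L * nd <= L * e') by (apply Rmult_le_compat_l; lra).
      assert (L * e' <= eps).
      { unfold e'. unfold Rdiv. rewrite <- Rmult_assoc.
        apply (Rmult_le_reg_r (L + 1)); [lra|].
        rewrite Rmult_assoc, Rinv_l, Rmult_1_r by lra. nra. }
      lra. }
    assert (HA : F xk - F z <= s * eps).
    { pose proof (Rle_abs (F xk - F z)). nra. }
    assert (HB : F z - F y <= s * (cv + eps)).
    { assert (Hyd : vnorm (vminus y xbar) < dv) by (rewrite Hy; unfold K in HtK; nra).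
      pose proof (Hv y s Hyd ltac:(lra)) as Hq.
      apply (Rmult_le_compat_l s) in Hq; [|lra].
      unfold Rdiv in Hq. rewrite (Rmult_comm (F _ - F _)), <- Rmult_assoc, Rinv_r,
        Rmult_1_l in Hq by lra. exact Hq. }
    assert (HC : F y - F xbar <= s * B).
    { pose proof (Hg tk ltac:(lra)) as Hq. fold y s in Hq.
      apply (Rmult_le_compat_l s) in Hq; [|lra].
      unfold Rdiv in Hq. rewrite (Rmult_comm (F _ - _ - _)), <- Rmult_assoc, Rinv_r,
        Rmult_1_l in Hq by lra. lra. }
    assert (0 <= s * (cv + B + 2 * eps)).
    { assert (Hq : F xbar <= F xk) by exact Hineq.
      replace (s * (cv + B + 2 * eps)) with (s * eps + s * (cv + eps) + s * B) by ring.
      lra. }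
    nra. }
  unfold is_second_dd, is_limsup_0 in Hl.
  destruct l as [c| |]; simpl; auto.
  - destruct Hl as [Hl1 _].
    destruct (Rle_dec 0 (cv + c)) as [|Hn]; auto.
    set (eps := - (cv + c) / 6).
    assert (He : eps > 0) by (unfold eps; lra).
    pose proof (Claim eps (c + eps) He (Hl1 eps He)). unfold eps in *. lra.
  - destruct (Hl (- cv - 3)) as [d [Hd Hg]].
    assert (H1 : (1 > 0)) by lra.
    pose proof (Claim 1 (- cv - 3) H1 (ex_intro _ d (conj Hd Hg))). lra.
Qed.
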